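(* Let $G_{\tan\cup\sec}$ be the $q$-grammar with master variables $\{x,y\}$, rule $x_j\mapsto q^j(1+x_jx_{j+1})$, $y_j\mapsto q^jx_jy_{j+1}$ ($j\ge0$), and order DIO, with $q$-derivative $D$. Then for $n\ge3$, every term of $D^n(x_0)$ takes exactly one of the following forms: (i) $x_nx_{n-1}^{\,n}$; (ii) $x_1^{\,n}x_0$; (iii) $x_{j+1}^{\,a}x_j^{\,b}$ with $a,b\le n$, $1\le j\le n-2$, $a+b\le n+1$, and $a+b+n+1$ even.
   Context: $\mathbb{K}$ is a commutative ring with unity and characteristic zero, $q$ an indeterminate. For a set $S$ of master variables, $\mathbb{S}=\{s_i:s\in S,\ i\ge0\}$ is a set of non-commuting variables, $F(\mathbb{S})$ the free group on $\mathbb{S}$, $\mathbb{E}=\mathbb{K}[q][F(\mathbb{S})]$ its group algebra. A rule $R$ assigns to each $s_i$ an element of $\mathbb{E}$. The up-arrow $\uparrow$ is the linear map replacing each letter $s_i^{\pm1}$ of a word by $s_{i+1}^{\pm1}$. DIO is the order that stably reorders the letters of a word according to the position of their underlying variable in the sequence $\dots,x_2,y_2,x_1,y_1,x_0,y_0$ (extended linearly). The $q$-derivative of a $q$-grammar $(S,R,\rho)$ is the $\mathbb{K}[q]$-linear map with $D(w_1\cdots w_n)=\sum_{j=1}^n\rho\big(w_1\cdots w_{j-1}R(w_j)\uparrow(w_{j+1}\cdots w_n)\big)$ for letters $w_j$, $D^0=\mathrm{id}$, $D^k=D\circ D^{k-1}$. Writing an element of $\mathbb{E}$ as $\sum_{w\in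 F(\mathbb{S})}a_ww$, its terms are the words $w$ (including possibly the empty word) with $a_w\ne0$. *)

(* Defs.v *)
From HB Require Import structures.
From mathcomp Require Import all_boot all_order all_algebra.
Set Implicit Arguments. Unset Strict Implicit. Unset Printing Implicit Defensive.
Import GRing.Theory.
Local Open Scope ring_scope.

Inductive mvar := MX | MY.
Definition mvar_code (v : mvar) : bool := if v is MX then true else false.
Definition mvar_decode (b : bool) : mvar := if b then MX else MY.
Lemma mvar_codeK : cancel mvar_code mvar_decode. Proof. by case. Qed.
HB.instance Definition _ := Equality.copy mvar (can_type mvar_codeK).

Definition letter := (mvar * nat)%type.
Definition word := seq letter.

Definition up (w : word) : word := [seq (l.1, l.2.+1) | l <- w].

(* DIO: position in the sequence ..., x_2, y_2, x_1, y_1, x_0, y_0.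
   dio_le a b : a does not come strictly after b. *)
Definition dio_le (a b : letter) : bool :=
  (b.2 < a.2)%N || ((a.2 == b.2) && ((a.1 == MX) || (b.1 == MY))).
(* Stable reordering (mathcomp's merge sort is stable). *)
Definition dio (w : word) : word := sort dio_le w.

(* Elements of E = K[q][F(S)] are represented as formal finite sums:
   lists of (coefficient, word) pairs; the coefficient of a word is the sum of
   the coefficients of its occurrences. *)
Definition elem (K : comNzRingType) := seq ({poly K} * word).

Definition coefE (K : comNzRingType) (e : elem K) (w : word) : {poly K} :=
  \sum_(p <- e | p.2 == w) p.1.

Definition is_term (K : comNzRingType) (e : elem K) (w : word) : Prop :=
  coefE e w != 0.

Definition rule_tansec (K : comNzRingType) (l : letter) : elem K :=
  let j := l.2 in
  match l.1 with
  | MX => [:: ('X ^+ j, [::]); ('X ^+ j, [:: (MX, j); (MX, j.+1)])]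
  | MY => [:: ('X ^+ j, [:: (MX, j); (MY, j.+1)])]
  end.

Definition qder_word (K : comNzRingType) (R : letter -> elem K)
    (rho : word -> word) (w : word) : elem K :=
  flatten [seq [seq (p.1, rho (take j w ++ p.2 ++ up (drop j.+1 w)))
               | p <- R (nth (MX, 0%N) w j)] | j <- iota 0 (size w)].

Definition qder (K : comNzRingType) (R : letter -> elem K)
    (rho : word -> word) (e : elem K) : elem K :=
  flatten [seq [seq (a.1 * p.1, p.2) | p <- qder_word R rho a.2] | a <- e].

Definition D_tansec (K : comNzRingType) (n : nat) (e : elem K) : elem K :=
  iter n (qder (@rule_tansec K) dio) e.

Definition x_ (j : nat) : letter := (MX, j).

Definition exactly_one3 (P1 P2 P3 : Prop) : Prop :=
  (P1 /\ ~ P2 /\ ~ P3) \/ (~ P1 /\ P2 /\ ~ P3) \/ (~ P1 /\ ~ P2 /\ P3).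

(* Main.v *)
Require Import Defs.
From mathcomp Require Import all_boot all_order all_algebra zify.
Import GRing.Theory.
Set Implicit Arguments. Unset Strict Implicit. Unset Printing Implicit Defensive.

Lemma mxx : (MX == MX) = true. Proof. by []. Qed.
Lemma myy : (MY == MY) = true. Proof. by []. Qed.
Lemma mxy : (MX == MY) = false. Proof. by []. Qed.
Lemma myx : (MY == MX) = false. Proof. by []. Qed.

Lemma dio_total : total dio_le.
Proof. move=> [[|] i] [[|] k]; rewrite /dio_le /= ?mxx ?myy ?mxy ?myx; lia. Qed.
Lemma dio_trans : transitive dio_le.
Proof. move=> [[|] i] [[|] k] [[|] l]; rewrite /dio_le /= ?mxx ?myy ?mxy ?myx; lia. Qed.
Lemma dio_anti : antisymmetric dio_le.
Proof. move=> [[|] i] [[|] k]; rewrite /dio_le /= ?mxx ?myy ?mxy ?myx => H; congr pair; lia. Qed.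

Definition shape (j a b : nat) : word := nseq a (x_ j.+1) ++ nseq b (x_ j).

Lemma sorted_nseq2 (x y : letter) a b : dio_le x x -> dio_le y y -> dio_le x y ->
  sorted dio_le (nseq a x ++ nseq b y).
Proof.
move=> hx hy hxy; elim: a => [|a IH].
  by case: b => //= b; elim: b => //= b ->; rewrite hy.
case: a IH => [|a] IH /=.
  by case: b IH => //= b ->; rewrite hxy.
by move: IH => /= ->; rewrite hx.
Qed.

Lemma sorted_shape j a b : sorted dio_le (shape j a b).
Proof. apply: sorted_nseq2; rewrite /dio_le /= ?mxx; lia. Qed.

Lemma dio_shape s j a b : perm_eq s (shape j a b) -> dio s = shape j a b.
Proof.
move=> H; rewrite /dio -[RHS](sorted_sort dio_trans (sorted_shape j a b)).
by apply/(perm_sortP dio_total dio_trans dio_anti).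
Qed.

Definition rw (l : letter) : seq word :=
  match l.1 with
  | MX => [:: [::]; [:: (MX, l.2); (MX, l.2.+1)]]
  | MY => [:: [:: (MX, l.2); (MY, l.2.+1)]]
  end.

Definition WD (w : word) : seq word :=
  flatten [seq [seq dio (take j w ++ p ++ up (drop j.+1 w))
               | p <- rw (nth (MX, 0%N) w j)] | j <- iota 0 (size w)].

Lemma qder_snd (K : comNzRingType) (e : elem K) :
  map snd (qder (@rule_tansec K) dio e) = flatten [seq WD a.2 | a <- e].
Proof.
elim: e => //= a e IH; rewrite map_cat IH; congr (_ ++ _).
rewrite -map_comp /qder_word /WD.
rewrite map_flatten -map_comp; congr flatten; apply: eq_map => j /=.
rewrite -map_comp /rule_tansec /rw; case: (nth _ _ _) => [[|] k] //=.
Qed.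

Definition Wn n := iter n (fun S => flatten [seq WD w | w <- S]) [:: [:: x_ 0]].

Lemma D_snd (K : comNzRingType) n :
  map snd (D_tansec n [:: (1%R : {poly K}, [:: x_ 0])]) = Wn n.
Proof.
elim: n => //= n IH; rewrite qder_snd -IH -map_comp; by [].
Qed.

Lemma term_mem (K : comNzRingType) (e : elem K) w : is_term e w -> w \in map snd e.
Proof.
rewrite /is_term /coefE; apply: contraR => H.
rewrite /Defs.coefE big1_seq // => p /andP [/eqP E Hp]; case/negP: H; rewrite -E.
by apply: map_f.
Qed.

Lemma WD_mem w w' : w' \in WD w -> exists i p, [/\ i < size w, p \in rw (nth (MX, 0) w i)
   & w' = dio (take i w ++ p ++ up (drop i.+1 w))].
Proof.
case/flattenP => s /mapP [i]; rewrite mem_iota add0n => /andP [_ Hi] -> /mapP [p Hp ->].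
by exists i, p.
Qed.

Lemma split_at (u v : word) l p :
  take (size u) (u ++ l :: v) ++ p ++ up (drop (size u).+1 (u ++ l :: v)) = u ++ p ++ up v
  /\ nth (MX, 0) (u ++ l :: v) (size u) = l.
Proof.
split; last by rewrite nth_cat ltnn subnn.
rewrite take_size_cat //; congr (_ ++ (_ ++ _)).
by rewrite -cat_rcons drop_size_cat // size_rcons.
Qed.

Lemma up_nseq k m : up (nseq k (x_ m)) = nseq k (x_ m.+1).
Proof. by rewrite /up map_nseq. Qed.

Lemma rw_x m : rw (x_ m) = [:: [::]; [:: x_ m; x_ m.+1]].
Proof. by []. Qed.

Lemma step_shape j a b w' : w' \in WD (shape j a b) -> exists i,
  (i < a /\ (w' = shape j.+1 (a-i-1) (i+b) \/ w' = shape j.+1 (a-i) (i+1+b))) \/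
  (i < b /\ (w' = shape j (a+b-i-1) i \/ w' = shape j (a+b-i) (i+1))).
Proof.
case/WD_mem => i [p [Hi Hp ->]].
rewrite /shape size_cat !size_nseq in Hi.
case: (ltnP i a) => Hia.
- have E : shape j a b = nseq i (x_ j.+1) ++ x_ j.+1 :: (nseq (a-i-1) (x_ j.+1) ++ nseq b (x_ j)).
    rewrite /shape -[x_ j.+1 :: _]cat1s !catA; congr (_ ++ _); change [:: x_ j.+1] with (nseq 1 (x_ j.+1)); rewrite -!nseqD; congr nseq; lia.
  rewrite E in Hp *.
  have [H1 H2] := split_at (nseq i (x_ j.+1)) (nseq (a - i - 1) (x_ j.+1) ++ nseq b (x_ j)) (x_ j.+1) p.
  rewrite size_nseq in H1 H2; rewrite H1; rewrite H2 rw_x !inE in Hp.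
  exists i; left; split => //.
  rewrite /up map_cat -/(up _) -/(up _) !up_nseq.
  case/orP: Hp => /eqP ->; [left|right]; apply: dio_shape; apply/permP => q;
  rewrite /shape !count_cat !count_nseq /=;
  move: (q (x_ j.+1)) (q (x_ j.+2)) => [] [] /=; lia.
- have E : shape j a b = (nseq a (x_ j.+1) ++ nseq (i-a) (x_ j)) ++ x_ j :: (nseq (b-(i-a)-1) (x_ j)).
    rewrite /shape -catA; congr (_ ++ _); rewrite -cat1s; change [:: x_ j] with (nseq 1 (x_ j)); rewrite -!nseqD; congr nseq; lia.
  rewrite E in Hp *.
  have [H1 H2] := split_at (nseq a (x_ j.+1) ++ nseq (i-a) (x_ j)) (nseq (b-(i-a)-1) (x_ j)) (x_ j) p.
  rewrite size_cat !size_nseq subnKC // in H1 H2; rewrite H1; rewrite H2 rw_x !inE in Hp.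
  exists (i-a); right; split; first lia.
  rewrite !up_nseq.
  case/orP: Hp => /eqP ->; [left|right]; apply: dio_shape; apply/permP => q;
  rewrite /shape !count_cat !count_nseq /=;
  move: (q (x_ j.+1)) (q (x_ j)) => [] [] /=; lia.
Qed.

Definition R (n j a b : nat) : Prop :=
  (j = n.-1 /\ a = 1 /\ b = n) \/ (j = 0 /\ a = n /\ b = 1) \/
  (a <= n /\ b <= n /\ 1 <= j /\ j <= n - 2 /\ a + b <= n.+1 /\ (a + b + n.+1) %% 2 = 0).

Definition P' n w := exists j a b, w = shape j a b /\ R n j a b.

Lemma shape_a0 j b : shape j.+1 0 b = shape j b 0.
Proof. by rewrite /shape cats0. Qed.

Lemma Pi m j a b : (R m j a b \/ (a = 0 /\ 1 <= j /\ R m j.-1 b 0) \/ (b = 0 /\ R m j.+1 0 a)) ->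
  P' m (shape j a b).
Proof.
case=> [H|[[-> [Hj H]]|[-> H]]].
- by exists j, a, b.
- exists j.-1, b, 0; split => //; case: j Hj H => // j _ _; exact: shape_a0.
- by exists j.+1, 0, a; rewrite shape_a0.
Qed.

Lemma step n j a b w' : 2 <= n -> R n j a b -> w' \in WD (shape j a b) -> P' n.+1 w'.
Proof.
move=> Hn HR /step_shape [i [[Hi [->|->]]|[Hi [->|->]]]];
  (case: HR => [[? [? ?]]|[[? [? ?]]|H]]); subst; apply: Pi; rewrite /R;
  try solve [ left; left; lia | left; right; left; lia | left; right; right; lia
        | right; left; split; [lia|split;[lia| right; right; lia]]
        | right; right; split; [lia | right; right; lia] ].
Qed.

Definition Rb (n j a b : nat) : bool :=
  [|| [&& j == n.-1, a == 1 & b == n], [&& j == 0, a == n & b == 1] |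
      [&& a <= n, b <= n, 1 <= j, j <= n - 2, a + b <= n.+1 & (a + b + n.+1) %% 2 == 0]].

Lemma RbR n j a b : Rb n j a b -> R n j a b.
Proof.
rewrite /Rb /R => /or3P [/and3P [/eqP -> /eqP -> /eqP ->]|/and3P [/eqP -> /eqP -> /eqP ->]|H].
- by left.
- by right; left.
- right; right; move: H => /and5P [? ? ? ? /andP [? /eqP ?]]; lia.
Qed.

Definition Pb n w : bool :=
  has (fun j => has (fun a => has (fun b => (w == shape j a b) && Rb n j a b)
     (iota 0 n.+2)) (iota 0 n.+2)) (iota 0 n.+2).

Lemma PbP n w : Pb n w -> P' n w.
Proof.
case/hasP => j _ /hasP [a _ /hasP [b _ /andP [/eqP -> H]]].
by exists j, a, b; split => //; apply: RbR.
Qed.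

Lemma base3 : all (Pb 3) (Wn 3).
Proof. by vm_compute. Qed.

Lemma Wn_P k w : w \in Wn (k + 3) -> P' (k + 3) w.
Proof.
elim: k w => [|k IH] w.
  by move=> Hw; apply: PbP; move/allP: base3; apply.
rewrite addSn /= => /flattenP [s /mapP [w0 Hw0 ->]].
have [j [a [b [E HR]]]] := IH w0 Hw0.
rewrite E; apply: step HR; lia.
Qed.

Lemma cnt_shape m j a b :
  count (pred1 (x_ m)) (shape j a b) = (j.+1 == m) * a + (j == m) * b.
Proof.
rewrite /shape count_cat !count_nseq /= /x_ !xpair_eqE /=; by [].
Qed.

Lemma shape_cnt j a b j' a' b' m : shape j a b = shape j' a' b' ->
  (j.+1 == m) * a + (j == m) * b = (j'.+1 == m) * a' + (j' == m) * b'.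
Proof. by move=> E; rewrite -!cnt_shape E. Qed.

Unset Implicit Arguments.
Local Open Scope ring_scope.

Theorem proposition3p8 (K : comNzRingType)
    (charK0 : forall m : nat, (m.+1)%:R != 0 :> K)
    (n : nat) (hn : (3 <= n)%N) (w : word) :
  is_term (D_tansec n [:: (1 : {poly K}, [:: x_ 0])]) w ->
  exactly_one3
    (w = x_ n :: nseq n (x_ n.-1))
    (w = nseq n (x_ 1) ++ [:: x_ 0])
    (exists a b j : nat,
        [/\ w = nseq a (x_ j.+1) ++ nseq b (x_ j),
            (a <= n)%N && (b <= n)%N,
            (1 <= j <= n - 2)%N,
            (a + b <= n.+1)%N & ~~ odd (a + b + n.+1)]).
Proof.
move=> /term_mem; rewrite D_snd => Hw.
have [j [a [b [E HR]]]] : P' n w.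
  by have := @Wn_P (n - 3)%N w; rewrite subnK //; apply.
have Ei : x_ n :: nseq n (x_ n.-1) = shape n.-1 1 n by case: n hn {Hw E HR}.
have Eii : nseq n (x_ 1) ++ [:: x_ 0] = shape 0 n 1 by [].
rewrite Ei Eii E /exactly_one3.
have Hsh : forall j a b, nseq a (x_ j.+1) ++ nseq b (x_ j) = shape j a b by [].
case: HR => [[? [? ?]]|[[? [? ?]]|[Ha [Hb [Hj1 [Hj2 [Hab Hp]]]]]]]; subst.
- left; split => //; split.
    by move/(shape_cnt n); lia.
  by case=> a' [b' [j' [/(shape_cnt n) H _ /andP [? ?] _ _]]]; lia.
- right; left; split; first by move/(shape_cnt n); lia.
  split => //.
  by case=> a' [b' [j' [/(shape_cnt 0) H _ /andP [? ?] _ _]]]; lia.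
- right; right; split; first by move/(shape_cnt n); lia.
  split; first by move/(shape_cnt 0); lia.
  exists a, b, j; split => //; try lia.
Qed.
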